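(* Let $g\ge1$, $n=g+1$, $B\in\mathbb Z^{g\times n}$ with $B_{i,1}=1$, $B_{i,i+1}=-1$ and other entries $0$, $Q=BB^T$, and let $k\in\{1,\dots,g\}$ and $\mathbf a\in[\mathbf k]$. Then the Delaunay set $\mathcal D_{\mathbf a,Q}$ is in bijection with the set $[\mathbf k]$ and with the set $\mathcal B_{\mathbf a,v_1}$ of bases of the matroid $\mathcal M_{\mathbf a,v_1}$.
   Context: $V_Q=\{\mathbf a\in\mathbb R^g:\ \mathbf a^TQ\mathbf a\le(\mathbf a-\mathbf c)^TQ(\mathbf a-\mathbf c)\ \forall\mathbf c\in\mathbb Z^g\}$ is the Voronoi polytope of the genus-$g$ banana graph (two vertices $v_1,v_2$ joined by $n$ edges). $[\mathbf k]\subset\mathbb R^g$ is the set of vectors with entries in $\{-\tfrac{k}{g+1},\tfrac{g+1-k}{g+1}\}$ having $k$ or $k-1$ entries equal to $\tfrac{g+1-k}{g+1}$ (these are vertices of $V_Q$). $\mathcal D_{\mathbf a,Q}=\{\mathbf c\in\mathbb Z^g:\mathbf a^TQ\mathbf a=(\mathbf a-\mathbf c)^TQ(\mathbf a-\mathbf c)\}$. Let $\mathbf s_{\mathbf a}\in\{0,1\}^n$ have $j$-th entry $0$ if $(B^T\mathbf a)_j>0$ and $1$ if $(B^T\mathbf a)_j<0$. The matroid $\mathcal M_{\mathbf a,v_1}$ on ground set $[n]$ has bases $\mathcal B_{\mathbf a,v_1}=\{I\subset[n],|I|=k:\ \exists\mathbf c\in\mathcal D_{\mathbf a,Q}\text{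 with }(B^T\mathbf c+\mathbf s_{\mathbf a})_i=1\ \forall i\in I\}$. *)

(* Defs.v *)
From HB Require Import structures.
From mathcomp Require Import all_boot all_order all_algebra.
Set Implicit Arguments. Unset Strict Implicit. Unset Printing Implicit Defensive.
Import Order.TTheory GRing.Theory Num.Theory.
Local Open Scope ring_scope.

(* Incidence-type matrix B of the genus-g banana graph, n = g+1 edges.
   0-indexed: B i 0 = 1, B i (i+1) = -1, other entries 0. *)
Definition bananaB (g : nat) : 'M[int]_(g, g.+1) :=
  \matrix_(i < g, j < g.+1)
    (if j == 0%N :> nat then 1 else if j == i.+1 :> nat then -1 else 0).

Definition bananaQ (g : nat) : 'M[rat]_g :=
  map_mx intr (bananaB g *m (bananaB g)^T).

Definition qform (g : nat) (Q : 'M[rat]_g) (x : 'cV[rat]_g) : rat :=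
  (x^T *m Q *m x) 0 0.

Definition in_bracket (g k : nat) (a : 'cV[rat]_g) : Prop :=
  (forall i, a i 0 = - (k%:R / g.+1%:R) \/ a i 0 = ((g.+1 - k)%:R / g.+1%:R))
  /\ (let m := #|[set i : 'I_g | a i 0 == (g.+1 - k)%:R / g.+1%:R]| in
      m = k \/ m = k.-1).

Definition in_delaunay (g : nat) (Q : 'M[rat]_g) (a : 'cV[rat]_g)
    (c : 'cV[int]_g) : Prop :=
  qform Q a = qform Q (a - map_mx intr c).

(* sign vector s_a in {0,1}^n: 0 if (B^T a)_j > 0, 1 if (B^T a)_j < 0
   (for a in [k] the entries of B^T a are never 0). *)
Definition svec (g : nat) (a : 'cV[rat]_g) (j : 'I_g.+1) : int :=
  if 0 < ((map_mx intr (bananaB g))^T *m a) j 0 then 0 else 1.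

Definition is_basis (g k : nat) (a : 'cV[rat]_g) (I : {set 'I_g.+1}) : Prop :=
  #|I| = k /\
  exists c : 'cV[int]_g, in_delaunay (bananaQ g) a c /\
    forall i, i \in I -> ((bananaB g)^T *m c) i 0 + svec a i = 1.

(* Main.v *)
Require Import Defs.
From HB Require Import structures.
From mathcomp Require Import all_boot all_order all_algebra.
From mathcomp Require Import zify ring lra.
From Stdlib Require Import ClassicalEpsilon ProofIrrelevance.
Set Implicit Arguments. Unset Strict Implicit. Unset Printing Implicit Defensive.
Import Order.TTheory GRing.Theory Num.Theory.
Local Open Scope ring_scope.

Lemma BBt g (i j : 'I_g) : (bananaB g *m (bananaB g)^T) i j = 1 + (i == j)%:R.
Proof.
rewrite mxE big_ord_recl !mxE /=.
rewrite (bigD1 i) //= !mxE /= eqxx big1 /=.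
  rewrite /bump /= add1n eqSS; have [->|ne] := eqVneq i j; first by rewrite eqxx /=; ring.
  by rewrite (_ : (i == j :> nat) = false) /=; [ring | exact: negbTE ne].
move=> l ln; rewrite !mxE /= /bump /= add1n eqSS.
by rewrite (_ : (l == i :> nat) = false) ?mul0r //; exact: negbTE ln.
Qed.

Lemma bananaQ_E g (i j : 'I_g) : bananaQ g i j = 1 + (i == j)%:R.
Proof. by rewrite /bananaQ mxE BBt rmorphD /= rmorph1 rmorph_nat. Qed.

Lemma qform_E g (x : 'cV[rat]_g) :
  qform (bananaQ g) x = \sum_i x i 0 ^+ 2 + (\sum_i x i 0) ^+ 2.
Proof.
rewrite /qform mxE.
have inner j : (x^T *m bananaQ g) 0 j = \sum_i x i 0 + x j 0.
  rewrite mxE; under eq_bigr => i _ do rewrite [X in X * _]mxE bananaQ_E mulrDr mulr1.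
  rewrite big_split /=; congr (_ + _); rewrite (bigD1 j) //= eqxx mulr1 big1 ?addr0 // => i /negbTE.
  by rewrite eq_sym => ->; rewrite mulr0.
under eq_bigr => j _ do rewrite inner mulrDl.
rewrite big_split /= -mulr_sumr -expr2 addrC; congr (_ + _).

Qed.

Lemma qform_uK g (k K : rat) (x : 'cV[rat]_g) : k = K * (g%:R + 1) ->
  qform (bananaQ g) x = \sum_i (x i 0 + K) ^+ 2
    + (k - \sum_i (x i 0 + K)) ^+ 2 - k * K.
Proof.
move=> hK.
rewrite qform_E.
under [X in _ = X + _ - _]eq_bigr => i _ do rewrite sqrrD.
rewrite !big_split /= -!mulr_suml !sumr_const card_ord.
set Q := \sum_i _ ^+ 2. set S := \sum_i x i 0.
rewrite hK. ring.
Qed.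

Lemma qform_u g k (x : 'cV[rat]_g) :
  qform (bananaQ g) x = \sum_i (x i 0 + k%:R / g.+1%:R) ^+ 2
    + (k%:R - \sum_i (x i 0 + k%:R / g.+1%:R)) ^+ 2 - k%:R * (k%:R / g.+1%:R).
Proof. by apply: qform_uK; rewrite natr1 mulfVK // pnatr_eq0. Qed.

Lemma zero_one g (k : int) (v : 'I_g -> int) :
  \sum_i v i ^+ 2 + (k - \sum_i v i) ^+ 2 = k ->
  (forall i, v i = 0 \/ v i = 1) /\ (k - \sum_i v i = 0 \/ k - \sum_i v i = 1).
Proof.
set v0 := k - _. move=> h.
have nn (z : int) : 0 <= z * (z - 1) by nia.
have zo (z : int) : z * (z - 1) = 0 -> z = 0 \/ z = 1.
  by move/eqP; rewrite mulf_eq0 subr_eq0 => /orP[/eqP|/eqP]; auto.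
have hs : \sum_i v i * (v i - 1) + v0 * (v0 - 1) = 0.
  under eq_bigr do rewrite mulrBr mulr1 -expr2.
  rewrite sumrB mulrBr mulr1 -expr2.
  have : \sum_i v i + v0 = k by rewrite /v0 addrC subrK.
  move: h; set A := \sum_i _ ^+ 2; set S := \sum_i v i. lia.
move/eqP: hs; rewrite paddr_eq0 ?sumr_ge0 // => /andP[/eqP hsum /eqP h0].
split; [move=> i; apply: zo; exact: (psumr_eq0P _ hsum) | exact: zo].
Qed.

Local Notation Kg g k := ((k%:R : rat) / (g.+1)%:R).

Lemma topval g k : (k <= g.+1)%N -> ((g.+1 - k)%:R / g.+1%:R : rat) = 1 - Kg g k.
Proof. by move=> hk; rewrite natrB // mulrBl divff // pnatr_eq0. Qed.

Lemma count_sum g k (x : 'cV[rat]_g) : (k <= g.+1)%N ->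
  (forall i, x i 0 + Kg g k = 0 \/ x i 0 + Kg g k = 1) ->
  \sum_i (x i 0 + Kg g k) = #|[set i : 'I_g | x i 0 == (g.+1 - k)%:R / g.+1%:R]|%:R.
Proof.
move=> hk h; rewrite topval // -sum1_card natr_sum [RHS]big_mkcond /=.
apply: eq_bigr => i _; rewrite inE.
rewrite eq_sym subr_eq eq_sym.
by have [->|->] := h i; rewrite ?eqxx // eq_sym oner_eq0.
Qed.

Lemma bracketP g k (x : 'cV[rat]_g) : (1 <= k)%N -> (k <= g.+1)%N ->
  in_bracket k x <->
  ((forall i, x i 0 + Kg g k = 0 \/ x i 0 + Kg g k = 1) /\
   (k%:R - \sum_i (x i 0 + Kg g k) = 0 \/ k%:R - \sum_i (x i 0 + Kg g k) = 1)).
Proof.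
move=> hk1 hk.
have kp : (k%:R : rat) = k.-1%:R + 1 by rewrite natr1 prednK.
split.
- case=> h1 h2.
  have h01 : forall i, x i 0 + Kg g k = 0 \/ x i 0 + Kg g k = 1.
    move=> i; case: (h1 i) => ->; [left; by rewrite addNr | right; by rewrite topval // subrK].
  split=> //; rewrite count_sum //.
  by case: h2 => ->; [left | right]; lra.
- case=> h01 h2; split.
  + move=> i; case: (h01 i) => e; [left | right].
      by apply/eqP; rewrite -addr_eq0 e.
    by rewrite topval //; apply/eqP; rewrite eq_sym subr_eq e.
  + rewrite count_sum // in h2.
    case: h2 => e; [left | right]; apply/eqP; rewrite -(eqr_nat rat); apply/eqP; lra.
Qed.

Lemma qform_bracket g k (x : 'cV[rat]_g) : (1 <= k)%N -> (k <= g.+1)%N ->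
  in_bracket k x -> qform (bananaQ g) x = k%:R - k%:R * Kg g k.
Proof.
move=> hk1 hk /(bracketP _ hk1 hk) [h01 h2].
have sq (z : rat) : z = 0 \/ z = 1 -> z ^+ 2 = z by case=> ->; rewrite ?expr0n ?expr1n.
rewrite (qform_u k) (eq_bigr _ (fun i _ => sq _ (h01 i))) sq //.
set S := \sum_i _; ring.
Qed.

Definition epsv g k (x : 'cV[rat]_g) (i : 'I_g) : int :=
  if x i 0 + Kg g k == 1 then 1 else 0.

Lemma eps_val g k (x : 'cV[rat]_g) i :
  x i 0 + Kg g k = 0 \/ x i 0 + Kg g k = 1 -> x i 0 + Kg g k = (epsv k x i)%:~R.
Proof. by rewrite /epsv; case=> ->; rewrite ?eqxx // eq_sym oner_eq0. Qed.

Lemma delaunay01 g k (a : 'cV[rat]_g) (c : 'cV[int]_g) :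
  (1 <= k)%N -> (k <= g.+1)%N -> in_bracket k a ->
  in_delaunay (bananaQ g) a c ->
  let v := fun i => epsv k a i - c i 0 in
  (forall i, (a - map_mx intr c) i 0 + Kg g k = (v i)%:~R) /\
  (forall i, v i = 0 \/ v i = 1) /\
  (k%:Z - \sum_i v i = 0 \/ k%:Z - \sum_i v i = 1).
Proof.
move=> hk1 hk ha hD v.
have [h01 _] := (bracketP _ hk1 hk).1 ha.
have ev i : (a - map_mx intr c) i 0 + Kg g k = (v i)%:~R.
  by rewrite !mxE /v intrB -eps_val //; ring.
split=> //.
move: hD; rewrite /in_delaunay (qform_bracket hk1 hk ha) (qform_u k).
rewrite (eq_bigr (fun i => (v i)%:~R ^+ 2)); last by move=> i _; rewrite ev.
rewrite [in (_ - _) ^+ 2](eq_bigr (fun i => (v i)%:~R)); last by move=> i _; rewrite ev.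
move=> hq.
apply: zero_one; apply: (@intr_inj rat).
rewrite !rmorphD /= rmorphXn rmorphB /= !rmorph_sum /=.
under eq_bigr => i _ do rewrite rmorphXn /=.
move: hq; set A := \sum_i _ ^+ 2; set S := \sum_i _. 
rewrite (_ : ((k%:Z)%:~R : rat) = k%:R) //.
move/(congr1 (fun z => z + k%:R * (k%:R / g.+1%:R))); by rewrite !subrK => /esym.
Qed.

Lemma Dto_bracket g k (a : 'cV[rat]_g) (c : 'cV[int]_g) :
  (1 <= k)%N -> (k <= g.+1)%N -> in_bracket k a ->
  in_delaunay (bananaQ g) a c -> in_bracket k (a - map_mx intr c).
Proof.
move=> hk1 hk ha hD.
have [ev [h01 h2]] := delaunay01 hk1 hk ha hD.
apply/(bracketP _ hk1 hk); split.
  by move=> i; rewrite ev; case: (h01 i) => ->; [left|right].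
rewrite (eq_bigr _ (fun i _ => ev i)) -rmorph_sum /=.
rewrite (_ : (k%:R : rat) = (k%:Z)%:~R) // -intrB.
by case: h2 => ->; [left|right].
Qed.

Lemma BTq0 g (a : 'cV[rat]_g) :
  ((map_mx intr (bananaB g))^T *m a) ord0 0 = \sum_i a i 0.
Proof. by rewrite mxE; apply: eq_bigr => i _; rewrite !mxE /= mul1r. Qed.

Lemma BTqS g (a : 'cV[rat]_g) i :
  ((map_mx intr (bananaB g))^T *m a) (lift ord0 i) 0 = - a i 0.
Proof.
rewrite mxE (bigD1 i) //= !mxE /= /bump /= add1n eqxx big1 ?addr0.
  by rewrite mulN1r.
move=> l ln; rewrite !mxE /= /bump /= add1n eqSS.
by rewrite (_ : (i == l :> nat) = false) ?mul0r //; rewrite eq_sym; exact: negbTE ln.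
Qed.

Lemma BTi0 g (c : 'cV[int]_g) :
  ((bananaB g)^T *m c) ord0 0 = \sum_i c i 0.
Proof. by rewrite mxE; apply: eq_bigr => i _; rewrite !mxE /= mul1r. Qed.

Lemma BTiS g (c : 'cV[int]_g) i :
  ((bananaB g)^T *m c) (lift ord0 i) 0 = - c i 0.
Proof.
rewrite mxE (bigD1 i) //= !mxE /= /bump /= add1n eqxx big1 ?addr0.
  by rewrite mulN1r.
move=> l ln; rewrite !mxE /= /bump /= add1n eqSS.
by rewrite (_ : (i == l :> nat) = false) ?mul0r //; rewrite eq_sym; exact: negbTE ln.
Qed.

Lemma hKg g k : (k%:R : rat) = Kg g k * (g%:R + 1).
Proof. by rewrite natr1 mulfVK // pnatr_eq0. Qed.

Lemma Kpos g k : (1 <= k)%N -> 0 < Kg g k.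
Proof. by move=> hk; rewrite divr_gt0 // ltr0n. Qed.

Lemma Klt1 g k : (k <= g)%N -> Kg g k < 1.
Proof. by move=> hk; rewrite ltr_pdivrMr ?ltr0n // mul1r ltr_nat ltnS. Qed.

Lemma sum_shift g (K k : rat) (a : 'cV[rat]_g) : k = K * (g%:R + 1) ->
  \sum_i a i 0 = K - (k - \sum_i (a i 0 + K)).
Proof. by move=> ->; rewrite big_split /= sumr_const card_ord; ring. Qed.

Lemma svecS g k (a : 'cV[rat]_g) i : (1 <= k)%N -> (k <= g)%N -> in_bracket k a ->
  svec a (lift ord0 i) = epsv k a i.
Proof.
move=> hk1 hkg ha.
have [h01 _] := (bracketP _ hk1 (leqW hkg)).1 ha.
rewrite /svec BTqS.
have -> : - a i 0 = Kg g k - (a i 0 + Kg g k) by ring.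
rewrite /epsv; case: (h01 i) => ->.
  by rewrite subr0 Kpos // eq_sym oner_eq0.
by rewrite eqxx subr_gt0 ltNge (ltW (Klt1 hkg)).
Qed.

Lemma svec0 g k (a : 'cV[rat]_g) : (1 <= k)%N -> (k <= g)%N -> in_bracket k a ->
  svec a ord0 = k%:Z - \sum_i epsv k a i.
Proof.
move=> hk1 hkg ha.
have [h01 h2] := (bracketP _ hk1 (leqW hkg)).1 ha.
apply: (@intr_inj rat).
rewrite intrB rmorph_sum /= -(eq_bigr _ (fun i _ => eps_val (h01 i))).
rewrite /svec BTq0 (sum_shift _ (hKg g k)).
rewrite (_ : ((k%:Z)%:~R : rat) = k%:R) //.
case: h2 => ->.
  by rewrite subr0 Kpos.
by rewrite subr_gt0 ltNge (ltW (Klt1 hkg)).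
Qed.

Lemma card01 n (U : 'I_n -> int) : (forall j, U j = 0 \/ U j = 1) ->
  (#|[set j | U j == 1]| : int) = \sum_j U j.
Proof.
move=> h; rewrite -sum1_card -natz natr_sum [LHS]big_mkcond /=.
by apply: eq_bigr => j _; rewrite inE; case: (h j) => ->.
Qed.

Definition Uf g (a : 'cV[rat]_g) (c : 'cV[int]_g) (j : 'I_g.+1) : int :=
  ((bananaB g)^T *m c) j 0 + svec a j.

Lemma Uf0 g k a c : (1 <= k)%N -> (k <= g)%N -> in_bracket k a ->
  @Uf g a c ord0 = k%:Z - \sum_i (epsv k a i - c i 0).
Proof. by move=> hk1 hkg ha; rewrite /Uf BTi0 (svec0 hk1 hkg ha) sumrB; ring. Qed.

Lemma UfS g k a c (i : 'I_g) : (1 <= k)%N -> (k <= g)%N -> in_bracket k a ->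
  @Uf g a c (lift ord0 i) = epsv k a i - c i 0.
Proof. by move=> hk1 hkg ha; rewrite /Uf BTiS (svecS _ hk1 hkg ha) addrC. Qed.

Lemma Uf01 g k a c : (1 <= k)%N -> (k <= g)%N -> in_bracket k a ->
  in_delaunay (bananaQ g) a c ->
  (forall j, @Uf g a c j = 0 \/ Uf a c j = 1) /\ \sum_j Uf a c j = k%:Z.
Proof.
move=> hk1 hkg ha hD.
have [_ [h01 h2]] := delaunay01 hk1 (leqW hkg) ha hD.
split.
  move=> j; case: (unliftP ord0 j) => [i ->|->].
    by rewrite (UfS c _ hk1 hkg ha); apply: h01.
  by rewrite (Uf0 c hk1 hkg ha).
rewrite big_ord_recl (Uf0 c hk1 hkg ha).
rewrite (eq_bigr _ (fun i _ => UfS c i hk1 hkg ha)).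
by rewrite subrK.
Qed.

Lemma card_Uf g k a c : (1 <= k)%N -> (k <= g)%N -> in_bracket k a ->
  in_delaunay (bananaQ g) a c -> #|[set j | @Uf g a c j == 1]| = k.
Proof.
move=> hk1 hkg ha hD.
have [h01 hs] := Uf01 hk1 hkg ha hD.
by have := card01 h01; rewrite hs => -[].
Qed.

Lemma sig_eq (A : Type) (P : A -> Prop) (x y : {a | P a}) :
  proj1_sig x = proj1_sig y -> x = y.
Proof.
case: x => x px; case: y => y py /= e; subst; congr exist; apply: proof_irrelevance.
Qed.

Lemma bij_of (A B : Type) (f : A -> B) :
  injective f -> (forall b, exists a, f a = b) -> bijective f.
Proof.
move=> inj sur.
exists (fun b => proj1_sig (constructive_indefinite_description _ (sur b))).
  move=> a; apply: inj.
  by case: (constructive_indefinite_description _ (sur (f a))).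
by move=> b; case: (constructive_indefinite_description _ (sur b)).
Qed.

Lemma basis_Uf g k a c : (1 <= k)%N -> (k <= g)%N -> in_bracket k a ->
  in_delaunay (bananaQ g) a c -> is_basis k a [set j | @Uf g a c j == 1].
Proof.
move=> hk1 hkg ha hD; split; first exact: card_Uf hk1 hkg ha hD.
by exists c; split=> // j; rewrite inE => /eqP.
Qed.

Theorem theorem3p12 (g k : nat) (hg : (1 <= g)%N) (hk1 : (1 <= k)%N)
    (hkg : (k <= g)%N) (a : 'cV[rat]_g) (ha : in_bracket k a) :
  (exists f : {c : 'cV[int]_g | in_delaunay (bananaQ g) a c} ->
              {x : 'cV[rat]_g | in_bracket k x}, bijective f) /\
  (exists h : {c : 'cV[int]_g | in_delaunay (bananaQ g) a c} ->
              {I : {set 'I_g.+1} | is_basis k a I}, bijective h).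
Proof.
have hk : (k <= g.+1)%N := leqW hkg.
split.
- exists (fun c => exist (fun x => in_bracket k x) (a - map_mx intr (sval c))
                     (Dto_bracket hk1 hk ha (svalP c))).
  apply: bij_of.
  + move=> [c hc] [c' hc'] /(congr1 (@proj1_sig _ _)) /= e.
    apply: sig_eq => /=; apply/matrixP => i j.
    by move/matrixP: e => /(_ i j); rewrite !mxE => /addrI /oppr_inj /intr_inj.
  + move=> [x hx].
    have [hx01 _] := (bracketP _ hk1 hk).1 hx.
    have [ha01 _] := (bracketP _ hk1 hk).1 ha.
    pose c := \col_i (epsv k a i - epsv k x i).
    have ex : a - map_mx intr c = x.
      apply/matrixP => i j; rewrite (ord1 j) !mxE intrB -!eps_val //; ring.
    have hc : in_delaunay (bananaQ g) a c.
      by rewrite /in_delaunay ex !(qform_bracket hk1 hk).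
    by exists (exist _ c hc); apply: sig_eq.
- exists (fun c => exist (fun I => is_basis k a I) [set j | Uf a (sval c) j == 1]
                     (basis_Uf hk1 hkg ha (svalP c))).
  apply: bij_of.
  + move=> [c hc] [c' hc'] /(congr1 (@proj1_sig _ _)) /= e.
    apply: sig_eq => /=; apply/matrixP => i j; rewrite (ord1 j).
    have [u1 _] := Uf01 hk1 hkg ha hc.
    have [u2 _] := Uf01 hk1 hkg ha hc'.
    move/setP: e => /(_ (lift ord0 i)); rewrite !inE.
    rewrite (UfS c i hk1 hkg ha) (UfS c' i hk1 hkg ha).
    move: (u1 (lift ord0 i)) (u2 (lift ord0 i)).
    rewrite (UfS c i hk1 hkg ha) (UfS c' i hk1 hkg ha).
    move: (epsv k a i) (c i 0) (c' i 0) => ee x y.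
    by case=> h1; case=> h2; rewrite h1 h2 /= => // _; lia.
  + move=> [I [hI [c [hc hcI]]]].
    exists (exist _ c hc); apply: sig_eq => /=.
    apply/eqP; rewrite eq_sym eqEcard hI (card_Uf hk1 hkg ha hc) leqnn andbT.
    by apply/subsetP => j /hcI; rewrite inE /Uf => ->.
Qed.
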